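(* For every integer $m\ge1$ and every $n\ge0$, $$v_{2n+1}(x,m,s,q)=\sum_{k=0}^{n}(-1)^k\begin{bmatrix}2n+1\\2k+1\end{bmatrix}\frac{[2m+2n]!\,[m+2n-2k-1]!}{[m+2n]!\,[2m+2n-2k-1]!}\,\frac{T_{2k+1}(q)\,x^{2k+1}}{(-q^{m+2n-2k};q)_{2k+1}}\,v_{2n-2k}(x,m,s,q).$$
   Context: $q$ is an indeterminate; $[n]=\frac{1-q^n}{1-q}$, $[n]!=[1]\cdots[n]$, $[0]!=1$, $\begin{bmatrix}n\\k\end{bmatrix}=\frac{[n]!}{[k]![n-k]!}$, $(a;q)_n=(1-a)(1-qa)\cdots(1-q^{n-1}a)$, $(a;q)_0=1$. For an integer $m\ge 0$ and indeterminates $x,s$, $$v_n(x,m,s,q)=\sum_{k=0}^{\lfloor n/2\rfloor}(-s)^kq^{k^2}\frac{[n]!}{[k]!\,[n-2k]!}\,\frac{[m+n-k-1]!}{[m+n-1]!}\,\frac{1}{(-q;q)_k\,(-q^{n+m-k};q)_k}\,x^{n-2k}\quad(n\ge1),\qquad v_0=1.$$ With $e_q(z)=\sum_{n\ge0}\frac{z^n}{[n]!}$, the $q$-tangent numbers $T_{2n+1}(q)$ are defined by $\frac{e_q(z)-e_q(-z)}{e_q(z)+e_q(-z)}=\sum_{n\ge0}(-1)^n\frac{T_{2n+1}(q)}{[2n+1]!}z^{2n+1}$ (so $T_1(q)=1$, $T_3(q)=q(1+q)$). *)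

(* Defs.v *)
From HB Require Import structures.
From mathcomp Require Import all_boot all_order all_algebra.
Set Implicit Arguments. Unset Strict Implicit. Unset Printing Implicit Defensive.
Import Order.TTheory GRing.Theory Num.Theory.
Local Open Scope ring_scope.

Section QDefs.
Variable F : fieldType.
Variable q : F.

Definition qint (n : nat) : F := \sum_(i < n) q ^+ i.
Definition qfact (n : nat) : F := \prod_(i < n) qint i.+1.
Definition qbinom (n k : nat) : F := qfact n / (qfact k * qfact (n - k)).
Definition qpoch (a : F) (n : nat) : F := \prod_(i < n) (1 - q ^+ i * a).

Definition qv (x s : F) (m n : nat) : F :=
  if n == 0%N then 1 else
  \sum_(k < n./2.+1)
     (- s) ^+ k * q ^+ (k * k)
     * (qfact n / (qfact k * qfact (n - 2 * k)))
     * (qfact (m + n - k - 1) / qfact (m + n - 1))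
     / (qpoch (- q) k * qpoch (- q ^+ (n + m - k)) k)
     * x ^+ (n - 2 * k).

(* Coefficients of e_q(z) + e_q(-z) and e_q(z) - e_q(-z), divided by 2:
   even part E(z) = sum_{j even} z^j/[j]!, odd part O(z) = sum_{j odd} z^j/[j]!. *)
Definition evcoef (j : nat) : F := if odd j then 0 else (qfact j)^-1.
Definition odcoef (j : nat) : F := if odd j then (qfact j)^-1 else 0.

(* Coefficients S_0..S_n of the power series S = O/E (note E_0 = 1), i.e. the
   unique series with E * S = O:  S_n = O_n - sum_{j<n} E_{n-j} S_j. *)
Fixpoint tanS_upto (n : nat) : seq F :=
  match n with
  | 0%N => [:: odcoef 0]
  | n'.+1 => let l := tanS_upto n' in
      rcons l (odcoef n - \sum_(j < n) evcoef (n - j) * nth 0 l j)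
  end.
Definition tanS (n : nat) : F := nth 0 (tanS_upto n) n.

(* q-tangent number T_{2n+1}(q): O/E = sum_n (-1)^n T_{2n+1}/[2n+1]! z^(2n+1). *)
Definition qtangent (n : nat) : F :=
  (-1) ^+ n * qfact (2 * n).+1 * tanS (2 * n).+1.

End QDefs.

(* Main.v *)
Require Import Defs.
From HB Require Import structures.
From mathcomp Require Import all_boot all_order all_algebra.
From mathcomp Require Import ring zify.
Import Order.TTheory GRing.Theory Num.Theory.
Local Open Scope ring_scope.
Set Implicit Arguments. Unset Strict Implicit.

Lemma qint0 (F : fieldType) (q : F) : qint q 0 = 0.
Proof. by rewrite /qint big_ord0. Qed.
Lemma qintS (F : fieldType) (q : F) n : qint q n.+1 = qint q n + q ^+ n.
Proof. by rewrite /qint big_ord_recr. Qed.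
Lemma qintD (F : fieldType) (q : F) a b : qint q (a + b) = qint q a + q ^+ a * qint q b.
Proof.
rewrite /qint big_split_ord /= mulr_sumr; congr (_ + _).
by apply: eq_bigr => i _; rewrite exprD.
Qed.
Lemma qfact0 (F : fieldType) (q : F) : qfact q 0 = 1.
Proof. by rewrite /qfact big_ord0. Qed.
Lemma qfactS (F : fieldType) (q : F) n : qfact q n.+1 = qfact q n * qint q n.+1.
Proof. by rewrite /qfact big_ord_recr. Qed.
Lemma qpochS (F : fieldType) (q a : F) n : qpoch q a n.+1 = qpoch q a n * (1 - q ^+ n * a).
Proof. by rewrite /qpoch big_ord_recr. Qed.
Lemma qpoch_split (F : fieldType) (q : F) a k :
  qpoch q (- q) (a + k) = qpoch q (- q) a * qpoch q (- q ^+ a.+1) k.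
Proof.
rewrite /qpoch big_split_ord /=; congr (_ * _).
by apply: eq_bigr => i _; rewrite !mulrN exprS exprD; congr (1 - _); ring.
Qed.

Definition Pf (F : fieldType) (q : F) j := qfact q j * qpoch q (- q) j.
Lemma Pf0 (F : fieldType) (q : F) : Pf q 0 = 1.
Proof. by rewrite /Pf qfact0 /qpoch big_ord0 mulr1. Qed.
Lemma PfS (F : fieldType) (q : F) n : Pf q n.+1 = Pf q n * (qint q n.+1 * (1 + q ^+ n.+1)).
Proof. rewrite /Pf qfactS qpochS exprS; ring. Qed.

Section NZ.
Lemma qfact_neq0 (F : fieldType) (q : F) (hq : forall j : nat, qint q j.+1 != 0) n : qfact q n != 0.
Proof. rewrite /qfact; apply/prodf_neq0 => i _; exact: hq. Qed.
Lemma qpochp_neq0 (F : fieldType) (q : F) (hq' : forall j : nat, 1 + q ^+ j.+1 != 0) p n :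
  qpoch q (- q ^+ p.+1) n != 0.
Proof.
rewrite /qpoch; apply/prodf_neq0 => i _; rewrite mulrN opprK -exprD addnS; exact: hq'.
Qed.
End NZ.


Lemma size_tanS_upto (F : fieldType) (q : F) n : size (tanS_upto q n) = n.+1.
Proof. by elim: n => [|n IH] //=; rewrite size_rcons IH. Qed.

Lemma nth_tanS_upto (F : fieldType) (q : F) n j : (j <= n)%N -> nth 0 (tanS_upto q n) j = tanS q j.
Proof.
elim: n => [|n IH]; first by rewrite leqn0 => /eqP ->.
rewrite leq_eqVlt => /orP [/eqP -> //|hj].
by rewrite /= nth_rcons size_tanS_upto hj IH.
Qed.

Lemma tanS_conv (F : fieldType) (q : F) l :
  \sum_(j < l.+1) evcoef q (l - j) * tanS q j = odcoef q l.
Proof.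
have ev0 : evcoef q 0 = 1 by rewrite /evcoef /= /qfact big_ord0 invr1.
case: l => [|l]; first by rewrite big_ord1 subnn ev0 mul1r /tanS.
rewrite big_ord_recr /= subnn ev0 mul1r.
have -> : tanS q l.+1 = odcoef q l.+1 - \sum_(j < l.+1) evcoef q (l.+1 - j) * tanS q j.
  rewrite /tanS /= nth_rcons size_tanS_upto ltnn eqxx; congr (_ - _).
  by apply: eq_bigr => j _; rewrite nth_tanS_upto // -ltnS.
by rewrite addrC subrK.
Qed.

Lemma sum_pairs (F : fieldType) n (f : nat -> F) :
  \sum_(j < (2 * n.+1)) f j = \sum_(k < n.+1) (f (2 * k)%N + f (2 * k).+1).
Proof.
elim: n => [|n IH]; first by rewrite big_ord1 muln1 2!big_ord_recr big_ord0 /= add0r.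
have -> : (2 * n.+2 = (2 * n.+1).+2)%N by rewrite !mulnS.
by rewrite 2!big_ord_recr [RHS]big_ord_recr /= -IH addrA.
Qed.

Lemma main_series (F : fieldType) (q x : F) (U : nat -> F)
  (hV : forall N, odd N -> \sum_(i < N.+1) ((-1) ^+ i / qfact q i) * x ^+ i * U (N - i)%N = 0) n :
  U (2 * n).+1 = \sum_(k < n.+1) tanS q (2 * k).+1 * x ^+ (2 * k).+1 * U (2 * n - 2 * k)%N.
Proof.
pose K := (2 * n).+2.
pose Ep := \poly_(i < K) (evcoef q i * x ^+ i).
pose Op := \poly_(i < K) (odcoef q i * x ^+ i).
pose Sp := \poly_(i < K) (tanS q i * x ^+ i).
pose Ue := \poly_(i < K) (if odd i then 0 else U i).
pose Uo := \poly_(i < K) (if odd i then U i else 0).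
have F1 : forall l, (l < K)%N -> (Ep * Sp)`_l = Op`_l.
  move=> l hl; rewrite coefMr coef_poly hl -(tanS_conv q l) mulr_suml.
  apply: eq_bigr => j _; rewrite !coef_poly.
  have hj : (j < K)%N by apply: leq_ltn_trans hl; rewrite -ltnS.
  rewrite hj (leq_ltn_trans (leq_subr _ _) hl).
  have -> : x ^+ l = x ^+ (l - j) * x ^+ j by rewrite -exprD subnK // -ltnS.
  ring.
have F2 : forall N, (N < K)%N -> (Ep * Sp * Ue)`_N = (Op * Ue)`_N.
  move=> N hN; rewrite !coefM; apply: eq_bigr => j _; rewrite F1 //.
  exact: leq_ltn_trans (ltnSE (ltn_ord j)) hN.
have F3 : forall N, (N < K)%N -> (Ep * Uo)`_N = (Op * Ue)`_N.
  move=> N hN; apply/eqP; rewrite -subr_eq0 !coefM -sumrB.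
  have -> : \sum_(j < N.+1) (Ep`_j * Uo`_(N - j) - Op`_j * Ue`_(N - j)) =
     if odd N then \sum_(i < N.+1) ((-1) ^+ i / qfact q i) * x ^+ i * U (N - i)%N else 0.
    case: ifP => hodd; [apply: eq_bigr => j _ | apply: big1 => j _];
      have hj : (j <= N)%N := ltnSE (ltn_ord j);
      have hjK : (j < K)%N by apply: leq_ltn_trans hN.
      rewrite !coef_poly hjK (leq_ltn_trans (leq_subr _ _) hN) /evcoef /odcoef oddB // hodd.
      rewrite -signr_odd; case: (odd j) => /=; rewrite ?expr0 ?expr1 ?mul0r ?mulr0 ?sub0r ?subr0 ?mul1r ?mulN1r ?mulNr //.
    rewrite !coef_poly hjK (leq_ltn_trans (leq_subr _ _) hN) /evcoef /odcoef oddB // hodd.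
    by case: (odd j) => /=; rewrite ?mul0r ?mulr0 ?subrr.
  by case: ifP => // hodd; rewrite hV.
pose Dp := Uo - Sp * Ue.
have F4 : forall N, (N < K)%N -> (Ep * Dp)`_N = 0.
  by move=> N hN; rewrite mulrBr coefB mulrA F3 // F2 // subrr.
have F5 : forall N, (N < K)%N -> Dp`_N = 0.
  elim/ltn_ind => N IH hN; have := F4 N hN.
  rewrite coefM big_ord_recl /= subn0 coef_poly /= /evcoef /= /qfact big_ord0 invr1 mul1r expr0 mul1r.
  rewrite big1 ?addr0 // => j _; rewrite IH ?mulr0 //.
    by rewrite subnS prednK ?subn_gt0 // leq_subr.
  by apply: leq_ltn_trans hN; rewrite leq_subr.
have := F5 (2 * n).+1 (ltnSn _).
rewrite /Dp coefB coef_poly ltnSn /= oddM /= => /eqP; rewrite subr_eq0 => /eqP ->.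
rewrite coefM.
have -> : ((2 * n).+2 = 2 * n.+1)%N by rewrite mulnS.
rewrite (sum_pairs n (fun j => Sp`_j * Ue`_((2 * n).+1 - j))); apply: eq_bigr => k _.
have hk : (k <= n)%N := ltnSE (ltn_ord k).
have h1 : (2 * k <= 2 * n)%N by lia.
rewrite subSS subSn // !coef_poly /K.
have c1 : (2 * k < (2 * n).+2)%N by lia.
have c2 : ((2 * n - 2 * k).+1 < (2 * n).+2)%N by lia.
have c3 : ((2 * k).+1 < (2 * n).+2)%N by lia.
have c4 : ((2 * n - 2 * k) < (2 * n).+2)%N by lia.
by rewrite c1 c2 c3 c4 /= oddB // !oddM /= mulr0 add0r.
Qed.


Definition eps (F : fieldType) (q : F) i := (-1) ^+ i / qfact q i.
Definition Vs (F : fieldType) (q x : F) (U : nat -> F) N :=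
  \sum_(i < N.+1) eps q i * x ^+ i * U (N - i)%N.

Lemma eps_shift (F : fieldType) (q : F) (hq : forall j : nat, qint q j.+1 != 0) i :
  eps q i.+1 * qint q i.+1 = - eps q i.
Proof.
rewrite /eps qfactS exprS invfM; field.
by rewrite qfact_neq0 ?hq.
Qed.

Lemma Vs_step (F : fieldType) (q x : F) (hq : forall j : nat, qint q j.+1 != 0) U L :
  qint q L.+1 * Vs q x U L.+1 =
  \sum_(i < L.+1) eps q i * x ^+ i * (qint q (L - i).+1 * U (L - i).+1 - x * q ^+ (L - i) * U (L - i)%N).
Proof.
rewrite /Vs mulr_sumr.
have e1 : forall i : 'I_L.+2, qint q L.+1 * (eps q i * x ^+ i * U (L.+1 - i)%N) =
   eps q i * x ^+ i * (qint q (L.+1 - i) * U (L.+1 - i)%N) +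
   eps q i * x ^+ i * (q ^+ (L.+1 - i) * qint q i * U (L.+1 - i)%N).
  move=> i; have hi : (i <= L.+1)%N := ltnSE (ltn_ord i).
  rewrite -{1}(subnK hi) qintD; ring.
rewrite (eq_bigr _ (fun i _ => e1 i)) big_split /=.
rewrite big_ord_recr /= subnn qint0 mul0r mulr0 addr0.
rewrite (big_ord_recl L.+1) /= qint0 mulr0 mul0r mulr0 add0r.
rewrite [RHS](eq_bigr _ (fun i _ => mulrBr _ _ _)) sumrB -sumrN; congr (_ + _).
  by apply: eq_bigr => i _; rewrite subSn // -ltnS.
apply: eq_bigr => i _.
have -> : bump 0 i = i.+1 by rewrite /bump leq0n.
rewrite subSS -[eps q i]opprK -(eps_shift hq) exprS; ring.
Qed.

Lemma Vs_odd (F : fieldType) (q x : F) (hq : forall j : nat, qint q j.+1 != 0)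
  (T : Type) (U : T -> nat -> F) (sh : T -> T) (c : T -> F)
  (hU : forall p M, qint q M.+2 * U p M.+2 - x * q ^+ M.+1 * U p M.+1 = c p * U (sh p) M)
  (hU0 : forall p, qint q 1 * U p 1%N - x * U p 0%N = 0) :
  forall n p, Vs q x (U p) (2 * n).+1 = 0.
Proof.
elim=> [|n IH] p.
  apply: (mulfI (hq 0%N)); rewrite mulr0 (Vs_step _ hq) big_ord1.
  by rewrite subn0 expr0 mulr1 hU0 mulr0.
have -> : (2 * n.+1).+1 = (2 * n).+3 by rewrite mulnS.
apply: (mulfI (hq (2 * n).+2)); rewrite mulr0.
rewrite (Vs_step _ hq) big_ord_recr /= subnn expr0 mulr1 hU0 mulr0 addr0.
transitivity (c p * Vs q x (U (sh p)) (2 * n).+1); last by rewrite IH mulr0.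
rewrite /Vs mulr_sumr.
apply: eq_bigr => i _.
have hi : (i <= (2 * n).+1)%N := ltnSE (ltn_ord i).
rewrite subSn // hU; ring.
Qed.


Lemma PfS2 (F : fieldType) (q : F) n : Pf q n.+1 = Pf q n * qint q (2 * n).+2.
Proof.
have -> : ((2 * n).+2 = n.+1 + n.+1)%N by lia.
rewrite PfS qintD; ring.
Qed.

Lemma Pf_neq0 (F : fieldType) (q : F) (hq : forall j : nat, qint q j.+1 != 0)
  (hq' : forall j : nat, 1 + q ^+ j.+1 != 0) n : Pf q n != 0.
Proof.
rewrite /Pf mulf_neq0 ?qfact_neq0 //.
rewrite /qpoch; apply/prodf_neq0 => i _; rewrite mulrN opprK -exprSr; exact: hq'.
Qed.

Definition gt (F : fieldType) (q x : F) a s M j :=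
  if (2 * j <= M)%N then
    (- s) ^+ j * q ^+ (j * j) * x ^+ (M - 2 * j) * Pf q (a + M - j)
    / (Pf q j * qfact q (M - 2 * j) * qfact q (2 * a + M + 1))
  else 0.

Lemma gt_val (F : fieldType) (q x : F) a s M j r i1 i2 :
  (2 * j + r = M)%N -> (a + j + r = i1)%N -> (2 * a + 2 * j + r + 1 = i2)%N ->
  gt q x a s M j = (- s) ^+ j * q ^+ (j * j) * x ^+ r * Pf q i1 / (Pf q j * qfact q r * qfact q i2).
Proof.
move=> h1 h2 h3; rewrite /gt ifT; last by lia.
have -> : (M - 2 * j = r)%N by lia.
have -> : (a + M - j = i1)%N by lia.
by have -> : (2 * a + M + 1 = i2)%N by lia.
Qed.

Lemma gt_zero (F : fieldType) (q x : F) a s M j : (M < 2 * j)%N -> gt q x a s M j = 0.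
Proof. by move=> h; rewrite /gt ifF //; lia. Qed.

Lemma tw0 (F : fieldType) (q x : F) (hq : forall j : nat, qint q j.+1 != 0)
  (hq' : forall j : nat, 1 + q ^+ j.+1 != 0) a s M :
  qint q M.+2 * gt q x a s M.+2 0 - x * q ^+ M.+1 * gt q x a s M.+1 0 =
  x ^+ 2 * gt q x a.+1 (s * q ^+ 2) M 0.
Proof.
rewrite (@gt_val _ _ _ _ _ _ _ M.+2 (a + M).+2 (2 * a + M).+3); try lia.
rewrite (@gt_val _ _ _ _ _ _ _ M.+1 (a + M).+1 (2 * a + M).+2); try lia.
rewrite (@gt_val _ _ _ _ _ _ _ M (a + M).+1 (2 * a + M).+3); try lia.
have E : qint q (2 * (a + M).+1).+2 = qint q M.+1 + q ^+ M.+1 * qint q (2 * a + M).+3.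
  by rewrite -qintD; congr qint; lia.
rewrite PfS2 E !qfactS !Pf0 !expr0 !mul1r.
rewrite !exprS.
field.
by rewrite ?hq ?(qfact_neq0 hq) ?(Pf_neq0 hq hq').
Qed.

Lemma pow_sq2 (F : fieldType) (q s : F) n : (- (s * q ^+ 2)) ^+ n = (- s) ^+ n * q ^+ n * q ^+ n.
Proof. by rewrite -mulNr exprMn -exprM mul2n -addnn exprD mulrA. Qed.
Lemma pow_sqr (F : fieldType) (q : F) n : q ^+ (n.+1 * n.+1) = q ^+ (n * n) * q ^+ n * q ^+ n * q.
Proof. rewrite -!exprD -exprSr; congr (_ ^+ _); lia. Qed.

Lemma twD (F : fieldType) (q x : F) (hq : forall j : nat, qint q j.+1 != 0)
  (hq' : forall j : nat, 1 + q ^+ j.+1 != 0) a s J R :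
  qint q (2 * J + R).+4 * gt q x a s (2 * J + R).+4 J.+1
  - x * q ^+ (2 * J + R).+3 * gt q x a s (2 * J + R).+3 J.+1 =
  x ^+ 2 * gt q x a.+1 (s * q ^+ 2) (2 * J + R).+2 J.+1
  - (s * q) * gt q x a.+1 (s * q ^+ 2) (2 * J + R).+2 J.
Proof.
rewrite (@gt_val _ _ _ _ _ _ _ R.+2 (a + J + R).+3 (2 * a + 2 * J + R).+4.+1); try lia.
rewrite (@gt_val _ _ _ _ _ _ _ R.+1 (a + J + R).+2 (2 * a + 2 * J + R).+4); try lia.
rewrite (@gt_val _ _ _ _ _ _ _ R (a + J + R).+2 (2 * a + 2 * J + R).+4.+1); try lia.
rewrite (@gt_val _ _ _ _ _ _ _ R.+2 (a + J + R).+3 (2 * a + 2 * J + R).+4.+1); try lia.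
have E1 : qint q (2 * J + R).+4 = qint q (2 * J).+2 + q ^+ J * q ^+ J * q ^+ 2 * qint q R.+2.
  rewrite (_ : (2 * J + R).+4 = ((2 * J).+2 + R.+2)%N); last lia.
  rewrite qintD -!exprD; congr (_ + _ ^+ _ * _); lia.
have E3 : q ^+ (2 * J + R).+3 = q ^+ J * q ^+ J * q ^+ R * q ^+ 3.
  by rewrite -!exprD; congr (_ ^+ _); lia.
have E2 : qint q (2 * (a + J + R).+2).+2 = qint q R.+1 + q ^+ R * q * qint q (2 * a + 2 * J + R).+4.+1.
  by rewrite -exprSr -qintD; congr qint; lia.
rewrite E1 E3 !pow_sq2 !pow_sqr !PfS2 E2 !qfactS.
rewrite !(exprS x) !(exprS (- s)) !(exprS q).
field.
by rewrite ?hq ?(qfact_neq0 hq) ?(Pf_neq0 hq hq').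
Qed.

Lemma twC (F : fieldType) (q x : F) (hq : forall j : nat, qint q j.+1 != 0)
  (hq' : forall j : nat, 1 + q ^+ j.+1 != 0) a s J :
  qint q (2 * J).+3 * gt q x a s (2 * J).+3 J.+1
  - x * q ^+ (2 * J).+2 * gt q x a s (2 * J).+2 J.+1 =
  x ^+ 2 * gt q x a.+1 (s * q ^+ 2) (2 * J).+1 J.+1
  - (s * q) * gt q x a.+1 (s * q ^+ 2) (2 * J).+1 J.
Proof.
rewrite (@gt_val _ _ _ _ _ _ _ 1 (a + J).+2 (2 * a + 2 * J).+4); try lia.
rewrite (@gt_val _ _ _ _ _ _ _ 0 (a + J).+1 (2 * a + 2 * J).+3); try lia.
rewrite (@gt_zero _ _ _ _ _ (2 * J).+1); try lia.
rewrite (@gt_val _ _ _ _ _ _ _ 1 (a + J).+2 (2 * a + 2 * J).+4); try lia.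
have E1 : qint q (2 * J).+3 = qint q (2 * J).+2 + q ^+ J * q ^+ J * q ^+ 2.
  by rewrite qintS -!exprD; congr (_ + _ ^+ _); lia.
have E3 : q ^+ (2 * J).+2 = q ^+ J * q ^+ J * q ^+ 2.
  by rewrite -!exprD; congr (_ ^+ _); lia.
have E2 : qint q (2 * (a + J).+1).+2 = qint q (2 * a + 2 * J).+4.
  by congr qint; lia.
rewrite E1 E3 !pow_sq2 !pow_sqr !PfS2 E2 !qfactS qfact0.
rewrite !(exprS x) !(exprS (- s)) !(exprS q).
rewrite (_ : qint q 1 = 1); last by rewrite /qint big_ord1 expr0.
field.
by rewrite ?hq ?(qfact_neq0 hq) ?(Pf_neq0 hq hq').
Qed.

Lemma twB (F : fieldType) (q x : F) (hq : forall j : nat, qint q j.+1 != 0)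
  (hq' : forall j : nat, 1 + q ^+ j.+1 != 0) a s J :
  qint q (2 * J).+2 * gt q x a s (2 * J).+2 J.+1
  - x * q ^+ (2 * J).+1 * gt q x a s (2 * J).+1 J.+1 =
  x ^+ 2 * gt q x a.+1 (s * q ^+ 2) (2 * J) J.+1
  - (s * q) * gt q x a.+1 (s * q ^+ 2) (2 * J) J.
Proof.
rewrite (@gt_val _ _ _ _ _ _ _ 0 (a + J).+1 (2 * a + 2 * J).+3); try lia.
rewrite (@gt_zero _ _ _ _ _ (2 * J).+1); try lia.
rewrite (@gt_zero _ _ _ _ _ (2 * J)); try lia.
rewrite (@gt_val _ _ _ _ _ _ _ 0 (a + J).+1 (2 * a + 2 * J).+3); try lia.
rewrite !pow_sq2 !pow_sqr !PfS2 !qfactS qfact0.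
rewrite !(exprS x) !(exprS (- s)) !(exprS q).
field.
by rewrite ?hq ?(qfact_neq0 hq) ?(Pf_neq0 hq hq').
Qed.

Lemma twS (F : fieldType) (q x : F) (hq : forall j : nat, qint q j.+1 != 0)
  (hq' : forall j : nat, 1 + q ^+ j.+1 != 0) a s M J :
  qint q M.+2 * gt q x a s M.+2 J.+1 - x * q ^+ M.+1 * gt q x a s M.+1 J.+1 =
  x ^+ 2 * gt q x a.+1 (s * q ^+ 2) M J.+1 - (s * q) * gt q x a.+1 (s * q ^+ 2) M J.
Proof.
case: (ltnP M (2 * J)) => h.
  rewrite !gt_zero; try lia; by rewrite !mulr0 subrr.
have [R ->] : exists R, M = (2 * J + R)%N by exists (M - 2 * J)%N; lia.
case: R => [|[|R]].
- rewrite addn0; exact: twB.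
- rewrite addn1; exact: twC.
- rewrite !addnS; exact: twD.
Qed.

Definition Uf (F : fieldType) (q x : F) a s M := \sum_(j < M.+1) gt q x a s M j.

Lemma Uf_ext (F : fieldType) (q x : F) a s M B : (M < B)%N ->
  \sum_(j < B) gt q x a s M j = Uf q x a s M.
Proof.
move=> hB; rewrite /Uf (big_ord_widen B (fun j => gt q x a s M j) hB).
rewrite [RHS]big_mkcond; apply: eq_bigr => j _; case: ifP => // hj; rewrite gt_zero //; lia.
Qed.

Lemma UR (F : fieldType) (q x : F) (hq : forall j : nat, qint q j.+1 != 0)
  (hq' : forall j : nat, 1 + q ^+ j.+1 != 0) a s M :
  qint q M.+2 * Uf q x a s M.+2 - x * q ^+ M.+1 * Uf q x a s M.+1 =
  (x ^+ 2 - s * q) * Uf q x a.+1 (s * q ^+ 2) M.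
Proof.
rewrite -(@Uf_ext _ _ _ _ _ M.+1 M.+3) // /Uf !mulr_sumr -sumrB big_ord_recl /= tw0 //.
rewrite (eq_bigr (fun i : 'I_M.+2 => x ^+ 2 * gt q x a.+1 (s * q ^+ 2) M i.+1
                   - (s * q) * gt q x a.+1 (s * q ^+ 2) M i)); last first.
  by move=> i _; rewrite /bump /= add1n twS.
rewrite sumrB -mulr_sumr -mulr_sumr addrA -mulrDr.
rewrite (_ : gt q x a.+1 (s * q ^+ 2) M 0 + _ = \sum_(j < M.+3) gt q x a.+1 (s * q ^+ 2) M j);
  last by rewrite [RHS]big_ord_recl; congr (_ + _); apply: eq_bigr => i _; rewrite /bump /= add1n.
rewrite (@Uf_ext _ _ _ _ _ M M.+3); last lia.
have -> : \sum_(i < M.+2) gt q x a.+1 (s * q ^+ 2) M i = Uf q x a.+1 (s * q ^+ 2) M by apply: Uf_ext.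
by rewrite -mulr_sumr mulrBl.
Qed.

Lemma UR0 (F : fieldType) (q x : F) (hq : forall j : nat, qint q j.+1 != 0)
  (hq' : forall j : nat, 1 + q ^+ j.+1 != 0) a s :
  qint q 1 * Uf q x a s 1 - x * Uf q x a s 0 = 0.
Proof.
rewrite /Uf big_ord_recr big_ord1 big_ord1 /= (@gt_zero _ _ _ _ _ 1 1) // addr0.
rewrite (@gt_val _ _ _ _ _ _ _ 1 a.+1 (2 * a).+2); try lia.
rewrite (@gt_val _ _ _ _ _ _ _ 0 a (2 * a).+1); try lia.
rewrite PfS2 !qfactS qfact0 (_ : qint q 1 = 1); last by rewrite /qint big_ord1 expr0.
have E : qint q (2 * a).+2 = qint q (2 * a).+2 by [].
rewrite !expr0 !expr1.
field.
by rewrite ?hq ?(qfact_neq0 hq) ?(Pf_neq0 hq hq').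
Qed.


Lemma qpochn_neq0 (F : fieldType) (q : F) (hq' : forall j : nat, 1 + q ^+ j.+1 != 0) n :
  qpoch q (- q) n != 0.
Proof. rewrite /qpoch; apply/prodf_neq0 => i _; rewrite mulrN opprK -exprSr; exact: hq'. Qed.

Lemma Uf_half (F : fieldType) (q x : F) a s N :
  Uf q x a s N = \sum_(j < N./2.+1) gt q x a s N j.
Proof.
have hB : (N./2.+1 <= N.+1)%N by rewrite ltnS; apply: leq_trans (half_leq (leqnSn N)) _; rewrite leq_half_double; lia.
rewrite /Uf (big_ord_widen N.+1 (fun j => gt q x a s N j) hB) [RHS]big_mkcond /=.
apply: eq_bigr => j _; case: ifP => // hj; rewrite gt_zero //.
move: hj => /negbT; rewrite ltnS geq_half_double -ltnNge -mul2n //.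
Qed.

Lemma qv_Uf (F : fieldType) (q x s : F) (hq : forall j : nat, qint q j.+1 != 0)
  (hq' : forall j : nat, 1 + q ^+ j.+1 != 0) a N :
  qv q x s a.+1 N = qfact q N * qfact q (2 * a + N + 1) / Pf q (a + N) * Uf q x a s N.
Proof.
case: N => [|N].
  rewrite /qv /= /Uf big_ord1 /= (@gt_val _ _ _ _ _ _ _ 0 a (2 * a).+1); try lia.
  rewrite /= addn0 addn1 qfact0 Pf0 !expr0 addn0; field.
  by rewrite ?hq ?(qfact_neq0 hq) ?(Pf_neq0 hq hq').
rewrite Uf_half /qv /= mulr_sumr; apply: eq_bigr => k _.
have hk : (2 * k <= N.+1)%N by rewrite mul2n -geq_half_double -ltnS.
have [r hr] : exists r, N.+1 = (2 * k + r)%N by exists (N.+1 - 2 * k)%N; lia.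
rewrite hr (@gt_val _ _ _ _ _ _ _ r (a + k + r) (2 * a + 2 * k + r + 1)); try lia.
rewrite (_ : (2 * k + r - 2 * k = r)%N); last lia.
rewrite (_ : (a.+1 + (2 * k + r) - k - 1 = a + k + r)%N); last lia.
rewrite (_ : (a.+1 + (2 * k + r) - 1 = a + (2 * k + r))%N); last lia.
rewrite (_ : (2 * k + r + a.+1 - k = (a + k + r).+1)%N); last lia.
rewrite (_ : (2 * a + (2 * k + r) + 1 = 2 * a + 2 * k + r + 1)%N); last lia.
rewrite /Pf (_ : (a + (2 * k + r) = (a + k + r) + k)%N); last lia.
rewrite qpoch_split.
field.
by rewrite ?hq ?(qfact_neq0 hq) ?(qpochn_neq0 hq') ?(qpochp_neq0 hq').
Qed.

Lemma Uf_odd_series (F : fieldType) (q x s : F) (hq : forall j : nat, qint q j.+1 != 0)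
  (hq' : forall j : nat, 1 + q ^+ j.+1 != 0) a n :
  Uf q x a s (2 * n).+1 =
  \sum_(k < n.+1) tanS q (2 * k).+1 * x ^+ (2 * k).+1 * Uf q x a s (2 * n - 2 * k)%N.
Proof.
apply: main_series => N hN.
have := @Vs_odd F q x hq (nat * F)%type (fun p => Uf q x p.1 p.2)
   (fun p => (p.1.+1, p.2 * q ^+ 2)) (fun p => x ^+ 2 - p.2 * q).
move=> H.
have := H (fun p M => @UR F q x hq hq' p.1 p.2 M) (fun p => @UR0 F q x hq hq' p.1 p.2) N./2 (a, s).
have e : (2 * N./2).+1 = N by rewrite mul2n -[X in _ = X]odd_double_half hN add1n.
by rewrite e /Vs /eps /=.
Qed.

Unset Implicit Arguments. Set Strict Implicit.

Theorem mainTheorem19 (F : fieldType) (q x s : F) (m n : nat)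
  (hq : forall j : nat, qint q j.+1 != 0)
  (hq' : forall j : nat, 1 + q ^+ j.+1 != 0)
  (hm : (1 <= m)%N) :
  qv q x s m (2 * n).+1 =
  \sum_(k < n.+1)
     (-1) ^+ k * qbinom q (2 * n).+1 (2 * k).+1
     * ((qfact q (2 * m + 2 * n) * qfact q (m + 2 * n - 2 * k - 1))
        / (qfact q (m + 2 * n) * qfact q (2 * m + 2 * n - 2 * k - 1)))
     * (qtangent q k * x ^+ (2 * k).+1 / qpoch q (- q ^+ (m + 2 * n - 2 * k)) (2 * k).+1)
     * qv q x s m (2 * n - 2 * k).
Proof.
case: m hm => [//|a] _.
rewrite qv_Uf // Uf_odd_series // mulr_sumr; apply: eq_bigr => [[k hk0]] _ /=.
have hk : (k <= n)%N := ltnSE hk0.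
have [d hd] : exists d, n = (k + d)%N by exists (n - k)%N; lia.
rewrite qv_Uf // hd /qtangent /qbinom.
rewrite (_ : (2 * (k + d) - 2 * k = 2 * d)%N); last lia.
rewrite (_ : ((2 * (k + d)).+1 - (2 * k).+1 = 2 * d)%N); last lia.
rewrite (_ : (2 * a + (2 * (k + d)).+1 + 1 = 2 * a.+1 + 2 * (k + d))%N); last lia.
rewrite (_ : (a.+1 + 2 * (k + d) - 2 * k - 1 = a + 2 * d)%N); last lia.
rewrite (_ : (a + (2 * (k + d)).+1 = a.+1 + 2 * (k + d))%N); last lia.
rewrite (_ : (2 * a.+1 + 2 * (k + d) - 2 * k - 1 = 2 * a + 2 * d + 1)%N); last lia.
rewrite (_ : (a.+1 + 2 * (k + d) - 2 * k = (a + 2 * d).+1)%N); last lia.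
rewrite /Pf (_ : (a.+1 + 2 * (k + d) = (a + 2 * d) + (2 * k).+1)%N); last lia.
rewrite qpoch_split -signr_odd.
case: (odd k); rewrite ?expr0 ?expr1; field;
  by rewrite ?hq ?(qfact_neq0 hq) ?(qpochn_neq0 hq') ?(qpochp_neq0 hq').
Qed.
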